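(* Let $l=(l_1,\dots,l_m)$ be an admissible cut length vector for $f$ with distinguished index $i_0$ (as in conditions (ii),(iii) of admissibility), let $q$ be the order of $\sigma$, and let $l'=(l'_1,\dots,l'_m)$ be obtained from $l$ by a SC-folding of length $l^*$, where $0<l^*<l_{i_0}$ and $u_{i_0}(l_{i_0}-l^* )\in\mathcal{W}^{true}(l)$; that is, $l'_{i_0}=l_{i_0}-l^*$, $l'_{\sigma^{-p}(i_0)}=l_{\sigma^{-p}(i_0)}-\lambda^{-p}l^*$ for $p=1,\dots,q-1$, and $l'_j=l_j=0$ for $j$ not in the $\sigma$-orbit of $i_0$. Then $l'$ is admissible, and its total length satisfies $\sum_i l'_i=\sum_i l_i-\left(1+\frac1\lambda+\cdots+\frac{1}{\lambda^{q-1}}\right)l^*$.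
   Context: Let $S$ be a compact surface with marked points $X=\{x_0,\dots,x_n\}$ and $f:S\to S$ a pseudo-Anosov homeomorphism relative to $X$ with $f(x_0)=x_0$, $f(X)=X$, invariant stable and unstable transverse measured foliations $(\mathcal{F}^s,\mu^s)$, $(\mathcal{F}^u,\mu^u)$ (measures fixed) and dilatation $\lambda>1$: $f$ multiplies the $\mu^s$-length of arcs in leaves of $\mathcal{F}^u$ by $\lambda$. True singularities are the singular points of the foliations. Let $u_1,\dots,u_m$ be the unstable separatrices at $x_0$, cyclically indexed around $x_0$, with $f(u_i)=u_{\sigma(i)}$. Let $u_i(t)$ be the point of $u_i$ at $\mu^s$-length $t$ from $x_0$. For a nonzero cut length vector $l\in\mathbb{R}_+^m$, the cut line along $u_i$ is $[x_0,u_i(l_i)]\subset u_i$, $\mathcal{L}(l)$ is the union of cut lines, and $\mathcal{W}^{true}(l)$ is the union of the stable leaf segments emanating from the true singularities, each taken up to its first intersection with $\mathcal{L}(l)$. The vector $l$ is admissible if (i) there is a $\sigma$-orbit $\mathcal{O}$ with $l_i\neq0$ iff $i\in\mathcal{O}$, and there is $i_0\in\mathcal{O}$ (the distinguished index) with (ii) $l_{\sigma(i)}=\lambda l_i$ for all $i\neq i_0$ and (iii) $u_{i_0}(l_{i_0})\in\mathcal{W}^{true}(l)$. *)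

(* Defs.v *)
From HB Require Import structures.
From mathcomp Require Import all_boot all_order all_algebra all_fingroup.
Set Implicit Arguments. Unset Strict Implicit. Unset Printing Implicit Defensive.
Import Order.TTheory GRing.Theory Num.Theory.
Local Open Scope ring_scope.

Section Defs.
Variables (R : realFieldType) (S : Type) (m : nat).

Definition in_sorbit (sigma : {perm 'I_m}) (i j : 'I_m) : Prop :=
  exists n : nat, j = (sigma ^+ n)%g i.

(* x lies in the union L(l) of the cut lines [x0, u_i(l_i)] ; u i t is the
   point of the separatrix u_i at mu^s-length t from x0 *)
Definition in_cut_lines (u : 'I_m -> R -> S) (l : 'I_m -> R) (x : S) : Prop :=
  exists i t, 0 <= t <= l i /\ x = u i t.

(* W^true(l): gamma k is the k-th stable leaf ray emanating from a true
   singularity (gamma k 0 = the singularity); each ray is taken up to (and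
   including) its first intersection with L(l) after its starting point, or
   entirely if it never meets L(l). *)
Definition in_Wtrue (K : Type) (gamma : K -> R -> S) (u : 'I_m -> R -> S)
    (l : 'I_m -> R) (x : S) : Prop :=
  exists k t, 0 <= t /\
    (forall s, 0 < s < t -> ~ in_cut_lines u l (gamma k s)) /\
    x = gamma k t.

Definition admissible_with (K : Type) (gamma : K -> R -> S)
    (u : 'I_m -> R -> S) (sigma : {perm 'I_m}) (lam : R)
    (l : 'I_m -> R) (i0 : 'I_m) : Prop :=
  (forall i, 0 <= l i) /\ (exists i, l i != 0) /\
  (exists o, (forall j, l j != 0 <-> in_sorbit sigma o j) /\ in_sorbit sigma o i0) /\
  (forall i, i != i0 -> l (sigma i) = lam * l i) /\
  in_Wtrue gamma u l (u i0 (l i0)).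

Definition admissible (K : Type) (gamma : K -> R -> S)
    (u : 'I_m -> R -> S) (sigma : {perm 'I_m}) (lam : R) (l : 'I_m -> R) : Prop :=
  exists i0, admissible_with gamma u sigma lam l i0.

End Defs.

(* Main.v *)
Require Import Defs.
From HB Require Import structures.
From mathcomp Require Import all_boot all_order all_algebra all_fingroup.
From mathcomp Require Import zify.
From Stdlib Require Import Classical.
Import Order.TTheory GRing.Theory Num.Theory.
Local Open Scope ring_scope.

Theorem proposition4p2 (R : realFieldType) (S : Type) (f : S -> S) (x0 : S)
  (m : nat) (sigma : {perm 'I_m}) (lam : R) (u : 'I_m -> R -> S)
  (K : finType) (gamma : K -> R -> S) (tau : K -> K)
  (* standing structure *)
  (hlam : 1 < lam)
  (hf : bijective f) (hfx0 : f x0 = x0)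
  (hu0 : forall i, u i 0 = x0)
  (hfu : forall i t, 0 <= t -> f (u i t) = u (sigma i) (lam * t))
  (hfg : forall k t, 0 <= t -> f (gamma k t) = gamma (tau k) (t / lam))
  (hrot : exists r : nat, forall i : 'I_m, val (sigma i) = ((val i + r) %% m)%N)
  (* the data of the proposition *)
  (l l' : 'I_m -> R) (i0 : 'I_m) (lstar : R)
  (hadm : admissible_with gamma u sigma lam l i0)
  (hl0 : 0 < lstar) (hl1 : lstar < l i0)
  (hW : in_Wtrue gamma u l (u i0 (l i0 - lstar)))
  (h'i0 : l' i0 = l i0 - lstar)
  (h'p : forall p : nat, (1 <= p <= #[sigma]%g - 1)%N ->
           l' ((sigma ^- p)%g i0) = l ((sigma ^- p)%g i0) - lam ^- p * lstar)
  (h'o : forall j, ~ in_sorbit sigma i0 j -> l' j = l j) :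
  admissible gamma u sigma lam l' /\
  \sum_i l' i = \sum_i l i - (\sum_(p < #[sigma]%g) lam ^- p) * lstar.
Proof.
case: hadm => [lge0 [_ [[o [ho hoi0]] [hii hWl]]]].
set q := #[sigma]%g.
have q0 : (0 < q)%N := order_gt0 sigma.
set a := fun p : nat => (sigma ^- p)%g i0.
have lam0 : 0 < lam by apply: lt_trans hlam.
have lamn0 : lam != 0 by rewrite gt_eqF.
have a0 : a 0%N = i0 by rewrite /a expg0 invg1 perm1.
have aS : forall p, a p.+1 = (sigma^-1)%g (a p).
  by move=> p; rewrite /a expgS invgM permM.
have E : forall p, (p <= q)%N -> (sigma ^- p = sigma ^+ (q - p))%g.
  move=> p hp; apply: mulg1_eq.
  by rewrite -expgnDr addnC subnK // expg_order.
have Dl : forall p, (p < q)%N -> l' (a p) = l (a p) - lam ^- p * lstar.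
  case=> [|p] hp; first by rewrite a0 h'i0 expr0 invr1 mul1r.
  by apply: h'p; apply/andP; split=> //; move: hp; rewrite /q; lia.
have injA : forall p p', (p < q)%N -> (p' < q)%N -> a p = a p' -> p = p'.
  have key : forall x y, (x < y)%N -> (y < q)%N -> a x = a y -> False.
    move=> p p' lt1 lt2 eqa.
    set k := (p' - p)%N.
    have hk : a k = i0.
      apply: (@perm_inj _ ((sigma ^- p)%g)).
      rewrite -/(a p) eqa /a -permM -invgM -expgnDr /k subnKC //.
      exact: ltnW.
    have k1 : (1 <= k <= q - 1)%N.
      by apply/andP; split; rewrite /k; lia.
    have := h'p k k1; rewrite -/(a k) hk h'i0 => /(addrI (l i0))/oppr_inj.
    move/esym; rewrite -[X in _ = X]mul1r => /(mulIf (lt0r_neq0 hl0)) /eqP; rewrite invr_eq1 => /eqP hx.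
    have : (1 < lam ^+ k) by rewrite exprn_egt1 // -lt0n; case/andP: k1.
    by rewrite hx ltxx.
  move=> p p' hp hp' eqa; case: (ltngtP p p') => // h.
    by case: (key _ _ h hp' eqa).
  by case: (key _ _ h hp (esym eqa)).
have ins_refl : forall x, in_sorbit sigma x x.
  by move=> x; exists 0%N; rewrite expg0 perm1.
have ins_trans : forall x y z, in_sorbit sigma x y -> in_sorbit sigma y z ->
    in_sorbit sigma x z.
  move=> x y z [n ->] [k ->]; exists (n + k)%N.
  by rewrite expgnDr permM.
have ins_sym : forall x y, in_sorbit sigma x y -> in_sorbit sigma y x.
  move=> x y [n ->]; exists (q - n %% q)%N.
  rewrite -E; last by apply: ltnW; rewrite ltn_mod.
  rewrite -permM.
  have -> : (sigma ^+ n * sigma ^- (n %% q))%g = 1%g.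
    by rewrite -expg_mod_order mulgV.
  by rewrite perm1.
have orbA : forall j, in_sorbit sigma i0 j <-> exists2 p, (p < q)%N & j = a p.
  move=> j; split.
    move=> [n ->]; rewrite -expg_mod_order.
    have hn : (n %% q < q)%N by rewrite ltn_mod.
    case hz: (n %% q)%N => [|n'].
      by exists 0%N => //; rewrite a0 expg0 perm1.
    exists (q - n'.+1)%N; first by move: hn; rewrite hz; lia.
    rewrite /a E; last by lia.
    by rewrite subKn // -hz ltnW.
  move=> [p hp ->]; exists (q - p)%N.
  by rewrite /a E // ltnW.
have Cl : forall p, (p < q)%N -> l (a p) = lam ^- p * l i0.
  elim=> [|p IH] hp; first by rewrite a0 expr0 invr1 mul1r.
  have hne : a p.+1 != i0.
    by apply/eqP; rewrite -a0 => /(injA _ _ hp q0).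
  have hs : sigma (a p.+1) = a p by rewrite aS permKV.
  have := hii _ hne; rewrite hs IH ?(ltnW hp) // => e.
  by rewrite exprS invfM -mulrA e mulKf.
have L' : forall p, (p < q)%N -> l' (a p) = lam ^- p * (l i0 - lstar).
  by move=> p hp; rewrite Dl // Cl // mulrBr.
have Pos : forall p, 0 < lam ^- p * (l i0 - lstar).
  by move=> p; rewrite mulr_gt0 // ?invr_gt0 ?exprn_gt0 // subr_gt0.
have Le : forall i, l' i <= l i /\ 0 <= l' i.
  move=> i; case: (classic (in_sorbit sigma i0 i)) => hi; last by rewrite h'o.
  case/orbA: hi => p hp ->; rewrite L' //; split; last exact: ltW.
  rewrite Cl // mulrBr lerBlDr lerDl; apply: ltW; rewrite mulr_gt0 //.
  by rewrite invr_gt0 exprn_gt0.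
split.
  exists i0; split; first by move=> i; case: (Le i).
  split; first by exists i0; rewrite h'i0 gt_eqF // subr_gt0.
  split.
    exists i0; split; last exact: ins_refl.
    move=> j; split.
      move=> hj; case: (classic (in_sorbit sigma i0 j)) => // hni.
      rewrite h'o // in hj; have := proj1 (ho j) hj.
      by apply: ins_trans; apply: ins_sym.
    by case/orbA=> p hp ->; rewrite L' // gt_eqF.
  split.
    move=> i hi; case: (classic (in_sorbit sigma i0 i)) => hin.
      case/orbA: hin => p hp ei; move: hi; rewrite ei.
      case: p hp ei => [|p] hp ei; first by rewrite a0 eqxx.
      move=> _; have hs : sigma (a p.+1) = a p by rewrite aS permKV.
      rewrite hs !L' ?(ltnW hp) //.
      by rewrite exprS invfM !mulrA mulfV // mul1r.
    have hns : ~ in_sorbit sigma i0 (sigma i).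
      move=> h; apply: hin; apply: (ins_trans _ _ _ h); apply: ins_sym.
      by exists 1%N; rewrite expg1.
    by rewrite !h'o // hii.
  rewrite h'i0; case: hW => k [t [ht [hs ->]]]; exists k, t; split => //.
  split => // s hs' [i [t' [ht' e]]]; apply: (hs s hs'); exists i, t'.
  split => //; case/andP: ht' => h1 h2; rewrite h1 /=.
  by apply: le_trans h2 _; case: (Le i).
have pw : forall i, l i - l' i =
    \sum_(p < q) (if i == a p then lam ^- p * lstar else 0).
  move=> i; case: (classic (in_sorbit sigma i0 i)) => hi.
    case/orbA: hi => p0 hp0 ->.
    rewrite (bigD1 (Ordinal hp0)) //= eqxx big1 ?addr0.
      by rewrite Dl // opprB addrC subrK.
    move=> j hj; case: eqP => // e.
    by move: hj; rewrite -val_eqE /= => /eqP; case; rewrite (injA _ _ hp0 (ltn_ord j) e).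
  rewrite h'o // subrr big1 // => j _; case: eqP => // e.
  by case: hi; apply/orbA; exists j.
have H : \sum_i (l i - l' i) = \sum_(p < q) lam ^- p * lstar.
  rewrite (eq_bigr _ (fun i _ => pw i)) exchange_big; apply: eq_bigr => p _.
  by rewrite -big_mkcond big_pred1_eq.
by rewrite mulr_suml -H sumrB opprB addrC subrK.
Qed.
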